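(* Let $n\ge1$ and let $\varphi\colon A\to B$ be a Frobenius $n$-homomorphism. Then for every $a\in A$, $$\psi_n(a)=1+\psi_1(a-1)+\psi_2(a-1)+\dots+\psi_n(a-1),$$ i.e. $\psi_n(a)=\mathrm{ber}_\varphi(a)$.
   Context: $\mathbb{K}=\mathbb{R}$ or $\mathbb{C}$; $A$ and $B$ are commutative associative unital $\mathbb{K}$-algebras. For a $\mathbb{K}$-linear map $\varphi\colon A\to B$ and $a\in A$, the characteristic function is $R_\varphi(a,z)=\exp\bigl(\varphi(\ln(1+az))\bigr)=1+\sum_{k\ge1}\psi_k(a)z^k\in B[[z]]$, with $\ln(1+az)=\sum_{k\ge1}(-1)^{k+1}a^kz^k/k$ and $\varphi$ applied coefficientwise (so $\psi_1=\varphi$). The Frobenius maps $\Phi_k\colon A^k\to B$ of $\varphi$ are defined by $\Phi_1=\varphi$ and $\Phi_{k+1}(a_1,\dots,a_{k+1})=\varphi(a_1)\Phi_k(a_2,\dots,a_{k+1})-\sum_{j=2}^{k+1}\Phi_k(a_2,\dots,a_{j-1},a_1a_j,a_{j+1},\dots,a_{k+1})$. A linear map $\varphi$ is a (Frobenius) $n$-homomorphism if $\varphi(1)=n\cdot1_B$ and $\Phi_k\equiv0$ for all $k\ge n+1$. For such $\varphi$ the $\varphi$-Berezinian is $\mathrm{ber}_\varphi(a)=1+\sum_{k=1}^n\psi_k(a-1)$. *)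

(* Defs.v *)
From HB Require Import structures.
From mathcomp Require Import all_boot all_order all_algebra.
Set Implicit Arguments. Unset Strict Implicit. Unset Printing Implicit Defensive.
Import Order.TTheory GRing.Theory Num.Theory.
Local Open Scope ring_scope.

Section Frob.
Variables (K : numFieldType) (A B : comAlgType K) (phi : {linear A -> B}).

(* Frob k s = Phi_k(s_0, ..., s_{k-1}) for a sequence s of length k
   (Phi_0 is unused, set to 0). *)
Fixpoint Frob (k : nat) (s : seq A) : B :=
  match k with
  | 0 => 0
  | k'.+1 =>
    match k' with
    | 0 => phi (nth 0 s 0)
    | _ => phi (nth 0 s 0) * Frob k' (behead s)
           - \sum_(j < k') Frob k' (set_nth 0 (behead s) j
                                     (nth 0 s 0 * nth 0 (behead s) j))
    end
  end.

Definition is_nhom (n : nat) : Prop :=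
  phi 1 = n%:R /\
  forall k : nat, (n.+1 <= k)%N -> forall s : seq A, size s = k -> Frob k s = 0.

Definition scB (c : K) : B := c%:A.

(* phi(ln(1 + a z)) truncated at degree N, as a polynomial in z over B *)
Definition logser (N : nat) (a : A) : {poly B} :=
  \sum_(1 <= i < N.+1)
     (scB ((-1) ^+ i.+1 / i%:R) * phi (a ^+ i))%:P * 'X^i.

(* psi_k(a) = k-th coefficient of exp(phi(ln(1 + a z))); since logser has no
   constant term, only the terms of exp of order <= k and of logser of
   degree <= k contribute to that coefficient. *)
Definition psi (k : nat) (a : A) : B :=
  (\sum_(m < k.+1) (scB (m`!%:R)^-1)%:P * (logser k a) ^+ m)`_k.

Definition ber (n : nat) (a : A) : B :=
  1 + \sum_(1 <= k < n.+1) psi k (a - 1).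

End Frob.

(* Main.v *)
Require Import Defs.
From Stdlib Require Import Setoid Morphisms.
From HB Require Import structures.
From mathcomp Require Import all_boot all_order all_algebra.
Set Implicit Arguments. Unset Strict Implicit. Unset Printing Implicit Defensive.
Import Order.TTheory GRing.Theory Num.Theory.
Local Open Scope ring_scope.

Section Eqm.
Variable R : comNzRingType.
Implicit Types p q r : {poly R}.

Definition eqm (M : nat) p q := exists r, p - q = r * 'X^(M.+1).

Lemma eqm_coef M p q : eqm M p q <-> forall i, (i <= M)%N -> p`_i = q`_i.
Proof.
split.
  move=> [r e] i Hi; apply/eqP; rewrite -subr_eq0 -coefB e coefMXn ltnS Hi //.
move=> H; exists (drop_poly M.+1 (p - q)).
rewrite -{1}(poly_take_drop M.+1 (p - q)).
suff -> : take_poly M.+1 (p - q) = 0 by rewrite add0r.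
apply/polyP=> i; rewrite coef_take_poly coef0 coefB; case: ifP => // Hi.
by rewrite H ?subrr.
Qed.

Lemma eqm_refl M : Reflexive (eqm M).
Proof. by move=> p; exists 0; rewrite subrr mul0r. Qed.
Lemma eqm_sym M : Symmetric (eqm M).
Proof. by move=> p q [r e]; exists (- r); rewrite mulNr -e opprB. Qed.
Lemma eqm_trans M : Transitive (eqm M).
Proof. by move=> p q s [r e] [r' e']; exists (r + r'); rewrite mulrDl -e -e' addrA subrK. Qed.

Add Parametric Relation M : {poly R} (eqm M)
  reflexivity proved by (@eqm_refl M)
  symmetry proved by (@eqm_sym M)
  transitivity proved by (@eqm_trans M) as eqm_rel.

#[local] Hint Extern 0 (eqm _ _ _) => reflexivity : core.

Add Parametric Morphism M : (@GRing.add {poly R}) with signature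
  (eqm M) ==> (eqm M) ==> (eqm M) as eqm_add.
Proof.
move=> p p' [r e] q q' [r' e']; exists (r + r').
by rewrite mulrDl -e -e' opprD addrACA.
Qed.

Add Parametric Morphism M : (@GRing.opp {poly R}) with signature
  (eqm M) ==> (eqm M) as eqm_opp.
Proof. by move=> p p' [r e]; exists (- r); rewrite mulNr -e opprD. Qed.

Add Parametric Morphism M : (@GRing.mul {poly R}) with signature
  (eqm M) ==> (eqm M) ==> (eqm M) as eqm_mul.
Proof.
move=> p p' [r e] q q' [r' e']; exists (r * q + p' * r').
have -> : p * q - p' * q' = (p - p') * q + p' * (q - q').
  by rewrite mulrBl mulrBr addrA subrK.
by rewrite e e' mulrDl mulrAC mulrA.
Qed.

Add Parametric Morphism M : (@GRing.exp {poly R}) with signature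
  (eqm M) ==> (@eq nat) ==> (eqm M) as eqm_exp.
Proof.
move=> p q H k; elim: k => [|k IH]; first by rewrite !expr0.
by rewrite !exprS IH H.
Qed.

Lemma eqm_le M' M p q : (M' <= M)%N -> eqm M p q -> eqm M' p q.
Proof.
move=> le /eqm_coef H; apply/eqm_coef=> i Hi; apply: H; exact: leq_trans le.
Qed.

Lemma eqm_MXn M k p : (M < k)%N -> eqm M (p * 'X^k) 0.
Proof.
move=> lt; exists (p * 'X^(k - M.+1)); rewrite subr0 -mulrA -exprD subnK //.
Qed.

Lemma eqm0X (L : {poly R}) : eqm 0 L 0 -> exists L0, L = L0 * 'X.
Proof. by move=> [r e]; exists r; rewrite -e subr0. Qed.

Lemma eqm_exp0 M k (L : {poly R}) : eqm 0 L 0 -> (M < k)%N -> eqm M (L ^+ k) 0.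
Proof.
move=> /eqm0X [L0 ->] lt; rewrite exprMn; exact: eqm_MXn.
Qed.

Lemma eqm_comp M p q (W : {poly R}) : W`_0 = 0 -> eqm M p q -> eqm M (p \Po W) (q \Po W).
Proof.
move=> W0 [r e].
have [W1 eW] : exists W1, W = W1 * 'X.
  apply: eqm0X; apply/eqm_coef=> i; rewrite leqn0 => /eqP ->.
  by rewrite W0 coef0.
exists ((r \Po W) * W1 ^+ M.+1).
have eX : forall k, 'X^k \Po W = W ^+ k.
  elim=> [|k IH]; first by rewrite !expr0 -polyC1 comp_polyC.
  by rewrite !exprS comp_polyM comp_polyX IH.
rewrite -comp_polyB e comp_polyM eX [in W ^+ _]eW exprMn mulrA //.
Qed.

Lemma eqm_deriv M p q : eqm M.+1 p q -> eqm M p^`() q^`().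
Proof.
move/eqm_coef=> H; apply/eqm_coef=> i Hi; rewrite !coef_deriv H //.
Qed.

Lemma eqm_sum0 M (I : Type) (s : seq I) (P : pred I) (F : I -> {poly R}) :
  (forall i, P i -> eqm M (F i) 0) -> eqm M (\sum_(i <- s | P i) F i) 0.
Proof.
move=> H; apply: (big_ind (fun x => eqm M x 0)) => //.
  by move=> x y -> ->; rewrite addr0.
Qed.

Lemma eqm_cancel M (c : R) p q :
  eqm M ((1 + c%:P * 'X) * p) ((1 + c%:P * 'X) * q) -> eqm M p q.
Proof.
move=> H.
set v := \sum_(i < M.+1) (- (c%:P * 'X)) ^+ i.
have Hv : eqm M ((1 + c%:P * 'X) * v) 1.
  have -> : (1 + c%:P * 'X) * v = 1 - (- (c%:P * 'X)) ^+ M.+1.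
    have -> : 1 + c%:P * 'X = - ((- (c%:P * 'X)) - 1) by rewrite opprB opprK addrC.
    by rewrite mulNr -subrX1 opprB.
  rewrite (@eqm_exp0 M M.+1 (- (c%:P * 'X))) ?subr0 //.
  by apply/eqm_coef=> i; rewrite leqn0 => /eqP ->; rewrite coefN coefCM coefX mulr0 oppr0 coef0.
have e1 : eqm M p (v * ((1 + c%:P * 'X) * p)) by rewrite mulrA (mulrC v) Hv mul1r.
have e2 : eqm M q (v * ((1 + c%:P * 'X) * q)) by rewrite mulrA (mulrC v) Hv mul1r.
by rewrite e1 e2 H.
Qed.

Section TF.
Hypothesis tf : forall (x : R) i, x *+ i.+1 = 0 -> x = 0.

Lemma eqm_int M (F G : {poly R}) : F`_0 = G`_0 -> eqm M F^`() G^`() -> eqm M.+1 F G.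
Proof.
move=> e0 /eqm_coef H; apply/eqm_coef=> [[|i]] Hi //.
have := H i Hi; rewrite !coef_deriv => /eqP; rewrite -subr_eq0 -mulrnBl => /eqP.
by move/tf/eqP; rewrite subr_eq0 => /eqP.
Qed.

Lemma ode_uniq M (P F G : {poly R}) : F`_0 = G`_0 ->
  eqm M F^`() (P * F) -> eqm M G^`() (P * G) -> eqm M.+1 F G.
Proof.
move=> e0 HF HG.
suff : forall k, (k <= M)%N -> eqm k.+1 F G by apply.
elim=> [|k IH] Hk.
  apply: eqm_int => //.
  have HF0 := eqm_le (leq0n M) HF; have HG0 := eqm_le (leq0n M) HG.
  have e : eqm 0 F G by apply/eqm_coef=> i; rewrite leqn0 => /eqP ->.
  by rewrite HF0 HG0 e.
apply: eqm_int => //.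
have HF0 := eqm_le Hk HF; have HG0 := eqm_le Hk HG.
by rewrite HF0 HG0 (IH (ltnW Hk)).
Qed.
End TF.
End Eqm.

Add Parametric Relation (R : comNzRingType) M : {poly R} (@eqm R M)
  reflexivity proved by (@eqm_refl R M)
  symmetry proved by (@eqm_sym R M)
  transitivity proved by (@eqm_trans R M) as eqm_rel_g.
#[global] Hint Extern 0 (eqm _ _ _) => reflexivity : core.
#[global] Instance eqm_add_g (R : comNzRingType) M :
  Proper (@eqm R M ==> @eqm R M ==> @eqm R M) (@GRing.add {poly R}).
Proof. move=> ? ? ? ? ? ?; exact: eqm_add. Qed.
#[global] Instance eqm_opp_g (R : comNzRingType) M :
  Proper (@eqm R M ==> @eqm R M) (@GRing.opp {poly R}).
Proof. move=> ? ? ?; exact: eqm_opp. Qed.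
#[global] Instance eqm_mul_g (R : comNzRingType) M :
  Proper (@eqm R M ==> @eqm R M ==> @eqm R M) (@GRing.mul {poly R}).
Proof. move=> ? ? ? ? ? ?; exact: eqm_mul. Qed.
#[global] Instance eqm_exp_g (R : comNzRingType) M :
  Proper (@eqm R M ==> @eq nat ==> @eqm R M) (@GRing.exp {poly R}).
Proof. move=> ? ? ? ? ? ->; exact: eqm_exp. Qed.


Lemma eqm_sum (R : comNzRingType) M (I : Type) (s : seq I) (P : pred I) (F G : I -> {poly R}) :
  (forall i, P i -> eqm M (F i) (G i)) -> eqm M (\sum_(i <- s | P i) F i) (\sum_(i <- s | P i) G i).
Proof.
move=> H.
have -> : \sum_(i <- s | P i) F i = \sum_(i <- s | P i) G i + \sum_(i <- s | P i) (F i - G i).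
  by rewrite -big_split /=; apply: eq_bigr => i _; rewrite addrC subrK.
have H0 : eqm M (\sum_(i <- s | P i) (F i - G i)) 0.
  by apply: eqm_sum0 => i Pi; rewrite (H i Pi) subrr.
by rewrite H0 addr0.
Qed.

Lemma comp_Xn (R : comNzRingType) (W : {poly R}) k : 'X^k \Po W = W ^+ k.
Proof.
elim: k => [|k IH]; first by rewrite !expr0 -polyC1 comp_polyC.
by rewrite !exprS comp_polyM comp_polyX IH.
Qed.

Lemma geo (R : comNzRingType) (x : R) N : (1 - x) * \sum_(i < N) x ^+ i = 1 - x ^+ N.
Proof. by rewrite -[1 - x]opprB mulNr -subrX1 opprB. Qed.

Lemma eqmX0 (R : comNzRingType) : eqm 0 ('X : {poly R}) 0.
Proof. have -> : ('X : {poly R}) = 1 * 'X^1 by rewrite mul1r expr1. exact: eqm_MXn. Qed.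

Definition Wp (R : comNzRingType) N : {poly R} := 'X * \sum_(i < N) (- 'X) ^+ i.

Lemma Wp0 (R : comNzRingType) N : (Wp R N)`_0 = 0.
Proof. by rewrite coefXM. Qed.

Lemma Wp1 (R : comNzRingType) N : eqm N ((1 + 'X) * Wp R N) 'X.
Proof.
have e : 1 + 'X = 1 - (- 'X : {poly R}) by rewrite opprK.
rewrite /Wp mulrCA e geo mulrBr mulr1.
have -> : 'X * (- 'X) ^+ N = - ((- 'X) ^+ N.+1 : {poly R}) by rewrite exprS mulNr opprK.
rewrite opprK (@eqm_exp0 R N N.+1 (- 'X)) ?addr0 //.
by rewrite eqmX0 oppr0.
Qed.

Lemma Wp4 (R : comNzRingType) m :
  eqm m (Wp R m.+1 + (1 + 'X) * (Wp R m.+1)^`()) 1.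
Proof.
have := eqm_deriv (Wp1 R m.+1).
by rewrite derivM derivD -polyC1 derivC derivX add0r mul1r.
Qed.

Section Exp.
Variables (K : numFieldType) (B : comAlgType K).

Definition Ex N (L : {poly B}) : {poly B} :=
  \sum_(m < N.+1) (scB B (m`!%:R)^-1)%:P * L ^+ m.

Lemma s_succ i : (scB B ((i.+1)`!%:R)^-1)%:P *+ i.+1 = (scB B (i`!%:R)^-1)%:P.
Proof.
rewrite -polyCMn; congr polyC; rewrite /scB scalerMnl; congr (_ *: _).
rewrite factS natrM invfM -mulr_natr mulrAC mulVf ?mul1r //.
by rewrite pnatr_eq0.
Qed.

Lemma Ex_derivE N L : (Ex N.+1 L)^`() = L^`() * Ex N L.
Proof.
rewrite /Ex raddf_sum big_ord_recl /= expr0 -polyC1 -polyCM derivC add0r.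
rewrite mulr_sumr; apply: eq_bigr => i _.
rewrite deriv_mulC deriv_exp /= mulrnAr -mulrnAl s_succ mulrCA //.
Qed.

Lemma Ex_deriv N L : eqm 0 L 0 -> eqm N (Ex N.+1 L)^`() (L^`() * Ex N.+1 L).
Proof.
move=> H; rewrite Ex_derivE [Ex N.+1 L]/Ex big_ord_recr /=.
by rewrite (@eqm_exp0 _ N N.+1 L) // mulr0 addr0.
Qed.

Lemma Ex0 N L : eqm 0 L 0 -> eqm 0 (Ex N L) 1.
Proof.
move=> H; rewrite /Ex big_ord_recl /= expr0 mulr1 fact0 invr1 /scB scale1r.
rewrite (@eqm_sum0 _ 0 _ _ _ (fun i : 'I_N => (scB B ((bump 0 i)`!%:R)^-1)%:P * L ^+ bump 0 i)) ?addr0 //.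
by move=> i _; rewrite (@eqm_exp0 _ 0 (bump 0 i) L) // mulr0.
Qed.

Lemma tfB (x : B) i : x *+ i.+1 = 0 -> x = 0.
Proof.
move=> H; rewrite -[x]scale1r -(@mulVf _ (i.+1)%:R) ?pnatr_eq0 //.
by rewrite -scalerA scaler_nat H scaler0.
Qed.

End Exp.

Definition emb (K : numFieldType) (C : comAlgType K) (s : {poly K}) : {poly C} :=
  map_poly (in_alg C) s.

Lemma emb1X (K : numFieldType) (C : comAlgType K) : emb C (1 + 'X) = 1 + 'X.
Proof. by rewrite /emb rmorphD rmorph1 /= map_polyX. Qed.

Lemma embW (K : numFieldType) (C : comAlgType K) N : emb C (Wp K N) = Wp C N.
Proof.
rewrite /emb /Wp rmorphM /= map_polyX rmorph_sum /=; congr (_ * _).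
by apply: eq_bigr => i _; rewrite rmorphXn rmorphN /= map_polyX.
Qed.

Lemma embdW (K : numFieldType) (C : comAlgType K) N : emb C (Wp K N)^`() = (Wp C N)^`().
Proof. by rewrite /emb -deriv_map -/(emb C _) embW. Qed.

Section Hat.
Variables (K : numFieldType) (A B : comAlgType K) (phi : {linear A -> B}).

Definition hat (p : {poly A}) : {poly B} := map_poly phi p.

Lemma coef_hat p i : (hat p)`_i = phi p`_i.
Proof. by rewrite coef_map_id0 // raddf0. Qed.

Lemma hatD p q : hat (p + q) = hat p + hat q.
Proof. by apply/polyP=> i; rewrite coefD !coef_hat coefD raddfD. Qed.

Lemma hat_sum (I : Type) (s : seq I) (P : pred I) (F : I -> {poly A}) :
  hat (\sum_(i <- s | P i) F i) = \sum_(i <- s | P i) hat (F i).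
Proof.
have h0 : hat 0 = 0 by apply/polyP=> i; rewrite coef_hat !coef0 raddf0.
exact: (big_morph hat hatD h0).
Qed.

Lemma hatC c : hat c%:P = (phi c)%:P.
Proof. by apply/polyP=> i; rewrite coef_hat !coefC; case: eqP => // _; rewrite raddf0. Qed.

Lemma hat_mulX p : hat (p * 'X) = hat p * 'X.
Proof. by apply/polyP=> i; rewrite coef_hat !coefMX; case: eqP => // _; rewrite ?raddf0 ?coef_hat. Qed.

Lemma hat_emb_mul s p : hat (emb A s * p) = emb B s * hat p.
Proof.
apply/polyP=> i; rewrite coef_hat !coefM raddf_sum; apply: eq_bigr => j _.
rewrite /emb !coef_map /= ?coef_hat.
by rewrite !mulr_algl linearZ.
Qed.

Lemma hat_comp s p : hat (p \Po emb A s) = hat p \Po emb B s.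
Proof.
elim/poly_ind: p => [|p c IH].
  by rewrite comp_poly0 /hat map_poly0 comp_poly0.
rewrite comp_poly_MXaddC !hatD hat_mulX !hatC comp_poly_MXaddC.
by rewrite mulrC hat_emb_mul IH mulrC.
Qed.

Lemma hat_deriv p : (hat p)^`() = hat p^`().
Proof. by apply/polyP=> i; rewrite coef_deriv !coef_hat coef_deriv raddfMn. Qed.

Lemma hat_eqm M p q : eqm M p q -> eqm M (hat p) (hat q).
Proof. by move/eqm_coef=> H; apply/eqm_coef=> i Hi; rewrite !coef_hat H. Qed.

Lemma hat1 : hat 1 = (phi 1)%:P.
Proof. by rewrite -polyC1 hatC. Qed.

End Hat.

Section LogA.
Variables (K : numFieldType) (A B : comAlgType K) (phi : {linear A -> B}).

Definition cf (i : nat) : K := (-1) ^+ i.+1 / i%:R.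
Definition logA N (a : A) : {poly A} := \sum_(1 <= i < N.+1) (cf i *: a ^+ i)%:P * 'X^i.
Definition Da N (a : A) : {poly A} := a%:P * \sum_(i < N) (- (a%:P * 'X)) ^+ i.

Lemma hat_CXn (x : A) i : hat phi (x%:P * 'X^i) = (phi x)%:P * 'X^i.
Proof.
apply/polyP=> j; rewrite coef_hat !coefCM !coefXn.
by case: eqP => _; rewrite ?mulr1 ?mulr0 ?raddf0.
Qed.

Lemma logserE N a : logser phi N a = hat phi (logA N a).
Proof.
rewrite /logser /logA hat_sum; apply: eq_bigr => i _.
by rewrite hat_CXn linearZ /= /scB mulr_algl.
Qed.

Lemma logA_deriv N a : (logA N a)^`() = Da N a.
Proof.
rewrite /logA /Da raddf_sum big_add1 /= big_mkord mulr_sumr.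
apply: eq_bigr => i _.
rewrite deriv_mulC derivXn /= exprNn exprMn -polyC_exp.
have -> : (-1 : {poly A}) ^+ i = ((-1) ^+ i)%:P by rewrite polyC_exp polyCN polyC1.
rewrite !mulrA -!polyCM mulrnAr -mulrnAl -polyCMn; congr (_ * _); congr polyC.
rewrite scalerMnl /cf -mulr_natr mulfVK ?pnatr_eq0 //.
rewrite !exprS mulN1r mulN1r opprK.
by rewrite -mulr_algl -[((-1) ^+ i)%:A]/(in_alg A ((-1)^+i)) rmorph_sign mulrCA mulrA.
Qed.

Lemma F1 N a : (1 + a%:P * 'X) * Da N a = a%:P * (1 - (- (a%:P * 'X)) ^+ N).
Proof.
have e : 1 + a%:P * 'X = 1 - (- (a%:P * 'X)) by rewrite opprK.
by rewrite /Da mulrCA e geo.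
Qed.

Lemma eqm_aX (R : comNzRingType) (a : R) : eqm 0 (- (a%:P * 'X)) 0.
Proof. by rewrite eqmX0 mulr0 oppr0. Qed.

Lemma F1m m a : eqm m ((1 + a%:P * 'X) * Da m.+1 a) a%:P.
Proof. by rewrite F1 (@eqm_exp0 _ m m.+1 _ (eqm_aX a)) // subr0 mulr1. Qed.

End LogA.

Lemma comp1 (R : comNzRingType) (W : {poly R}) : 1 \Po W = 1.
Proof. by rewrite -polyC1 comp_polyC. Qed.

Lemma alg1 (R : comNzRingType) (x y d w : R) :
  x * y * (1 + x * (d * w)) = x * (y + x * w * (y * d)).
Proof.
rewrite -mulrA mulrDr mulr1; congr (_ * (_ + _)).
rewrite mulrCA [y * d]mulrC !mulrA [x * w * d]mulrAC.
by rewrite -!mulrA; congr (_ * _); rewrite mulrC mulrA.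
Qed.

Lemma alg2 (R : comNzRingType) (b W x w : R) :
  1 + b * W + x * w * b = 1 + b * (W + x * w).
Proof. by rewrite -addrA mulrDr [x * w * b]mulrC. Qed.

Section GA.
Variables (K : numFieldType) (A : comAlgType K).

Lemma F3 N (a : A) :
  eqm N ((1 + 'X) * (1 + (a - 1)%:P * Wp A N)) (1 + a%:P * 'X).
Proof.
rewrite mulrDr mulr1 mulrCA Wp1 polyCB polyC1 mulrBl mul1r.
by rewrite -addrA [X in _ + X]addrC subrK.
Qed.

Lemma F2m m (b : A) :
  eqm m ((1 + b%:P * Wp A m.+1) * (Da m.+1 b \Po Wp A m.+1)) b%:P.
Proof.
have := eqm_comp (Wp0 A m.+1) (F1m m b).
by rewrite comp_polyM comp_polyD comp1 comp_polyM comp_polyC comp_polyX.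
Qed.

Lemma GA m (a : A) :
  eqm m ((1 + 'X) * Da m.+1 a)
        (1 + (1 + 'X) * ((Da m.+1 (a - 1) \Po Wp A m.+1) * (Wp A m.+1)^`())).
Proof.
apply: (@eqm_cancel _ m a).
rewrite mulrCA (F1m m a).
have H3 := eqm_le (leqnSn m) (F3 m.+1 a).
rewrite -H3 alg1 (F2m m (a - 1)) alg2 (Wp4 A m) mulr1.
have -> : 1 + (a - 1)%:P = a%:P by rewrite polyCB polyC1 addrC subrK.
by [].
Qed.
End GA.

Lemma eqm_coefP (R : comNzRingType) M (p q : {poly R}) :
  eqm M p q -> forall i, (i <= M)%N -> p`_i = q`_i.
Proof. by move/eqm_coef. Qed.

Lemma eqm_addr0 (R : comNzRingType) M (p q : {poly R}) : eqm M q 0 -> eqm M (p + q) p.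
Proof. by move=> H; rewrite H addr0. Qed.

Lemma top1X (R : comNzRingType) k :
  (forall j, (k < j)%N -> ((1 + 'X : {poly R}) ^+ k)`_j = 0) /\ ((1 + 'X : {poly R}) ^+ k)`_k = 1.
Proof.
elim: k => [|k [IH1 IH2]].
  rewrite expr0; split; last by rewrite coefC.
  by case=> // j _; rewrite coefC.
have e : (1 + 'X : {poly R}) ^+ k.+1 = (1 + 'X) ^+ k + (1 + 'X) ^+ k * 'X.
  by rewrite exprSr mulrDr mulr1.
rewrite e; split.
  move=> [|j] // Hj; rewrite coefD coefMX /= IH1 ?IH1 ?addr0 //.
  exact: ltnW.
by rewrite coefD coefMX /= IH1 // IH2 add0r.
Qed.

Lemma comp_sum (R : comNzRingType) (W : {poly R}) (I : Type) (s : seq I) (F : I -> {poly R}) :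
  (\sum_(i <- s) F i) \Po W = \sum_(i <- s) (F i \Po W).
Proof. exact: (big_morph (comp_poly W) (fun p q => comp_polyD p q W) (comp_poly0 W)). Qed.

Section Final.
Variables (K : numFieldType) (A B : comAlgType K) (phi : {linear A -> B}).

Lemma logser_tail k N (a : A) :
  eqm k (\sum_(k.+1 <= i < N.+1) (scB B ((-1) ^+ i.+1 / i%:R) * phi (a ^+ i))%:P * 'X^i) 0.
Proof.
rewrite big_nat_cond; apply: eqm_sum0 => i /andP [/andP [Hi _] _].
exact: eqm_MXn.
Qed.

Lemma logser0 N (a : A) : eqm 0 (logser phi N a) 0.
Proof. exact: logser_tail. Qed.

Lemma logser_trunc k N (a : A) : (k <= N)%N -> eqm k (logser phi N a) (logser phi k a).
Proof.
move=> le; rewrite /logser (@big_cat_nat _ _ _ k.+1) //= ?ltnS //.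
apply: eqm_addr0; exact: logser_tail.
Qed.

Lemma Gcoef m j (b : A) : (j <= m)%N ->
  (Ex (m.+1) (logser phi m.+1 b))`_j.+1 = psi phi j.+1 b.
Proof.
move=> le.
suff H : eqm j.+1 (Ex m.+1 (logser phi m.+1 b)) (Ex j.+1 (logser phi j.+1 b)).
  by move/eqm_coef: H => ->.
apply: (@ode_uniq _ (@tfB K B) j ((logser phi j.+1 b)^`())).
- have h1 := eqm_coefP (Ex0 m.+1 (logser0 m.+1 b)) (leqnn 0).
  have h2 := eqm_coefP (Ex0 j.+1 (logser0 j.+1 b)) (leqnn 0).
  by rewrite h1 h2.
- have H1 := eqm_le le (Ex_deriv m (logser0 m.+1 b)).
  have H2 := eqm_deriv (logser_trunc b (le : (j.+1 <= m.+1)%N)).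
  by rewrite H1 H2.
- by have := Ex_deriv j (logser0 j.+1 b).
Qed.

End Final.

Lemma alg3 (R : comNzRingType) (x g l w : R) n :
  x ^+ n *+ n.+1 * g + x ^+ n.+1 * (l * g * w) = x ^+ n * g * (n.+1%:R + x * (l * w)).
Proof.
rewrite mulrDr mulr_natr mulrnAl; congr (_ + _).
rewrite exprSr -!mulrA; congr (_ * _).
by rewrite [RHS]mulrCA; congr (_ * _); rewrite [LHS]mulrCA.
Qed.

Lemma alg4 (R : comNzRingType) (x g p : R) n :
  x ^+ n * g * (x * p) = p * (x ^+ n.+1 * g).
Proof.
rewrite exprSr [RHS]mulrC -!mulrA; congr (_ * _).
by rewrite mulrCA.
Qed.

Unset Implicit Arguments.

Theorem mainTheorem6 (K : numFieldType) (A B : comAlgType K)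
  (phi : {linear A -> B}) (n : nat) :
  (1 <= n)%N -> is_nhom phi n ->
  forall a : A,
    psi phi n a = 1 + \sum_(1 <= k < n.+1) psi phi k (a - 1).
Proof.
case: n => [//|m] _ [phi1 _] a.
set b := a - 1.
set La := logser phi m.+1 a. set Lb := logser phi m.+1 b.
set G := Ex m.+1 Lb. set W := Wp B m.+1.
pose F := (1 + 'X : {poly B}) ^+ m.+1 * (G \Po W).
have -> : psi phi m.+1 a = (Ex m.+1 La)`_m.+1 by [].
have HG0 : eqm 0 G 1 := Ex0 m.+1 (logser0 phi m.+1 b).
have HA : eqm m.+1 F (Ex m.+1 La).
  apply: (@ode_uniq _ (@tfB K B) m (La^`())).
  - have h1 : eqm 0 F 1.
      by rewrite /F (eqm_comp (Wp0 B m.+1) HG0) comp1 eqmX0 addr0 expr1n mulr1.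
    have h2 := Ex0 m.+1 (logser0 phi m.+1 a).
    by rewrite (eqm_coefP h1 (leqnn 0)) (eqm_coefP h2 (leqnn 0)).
  - have HQ : eqm m (m.+1%:R + (1 + 'X) * ((Lb^`() \Po W) * W^`())) ((1 + 'X) * La^`()).
      have := hat_eqm phi (GA m a).
      rewrite -!(embdW A) -!(embW A) -!(emb1X A).
      rewrite hat_emb_mul hatD hat1 hat_emb_mul [(_ \Po _) * _]mulrC hat_emb_mul hat_comp.
      rewrite emb1X embW embdW -logA_deriv -hat_deriv -logserE -logA_deriv -hat_deriv -logserE.
      rewrite phi1 polyCMn polyC1 [_^`() * _]mulrC => H.
      by symmetry.
    have d1X : (1 + 'X : {poly B})^`() = 1 by rewrite derivD derivX -polyC1 derivC add0r.
    have HGW : eqm m (G^`() \Po W) ((Lb^`() \Po W) * (G \Po W)).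
      rewrite -comp_polyM; apply: eqm_comp; first exact: Wp0.
      by have := Ex_deriv m (logser0 phi m.+1 b).
    rewrite /F derivM deriv_exp d1X mul1r deriv_comp HGW /=.
    by rewrite alg3 HQ alg4.
  - by have := Ex_deriv m (logser0 phi m.+1 a).
rewrite -(eqm_coefP HA (leqnn _)).
pose T := \poly_(i < m.+2) G`_i.
have HT : eqm m.+1 G T by apply/eqm_coef => i Hi; rewrite coef_poly ltnS Hi.
have HF : eqm m.+1 F (\sum_(i < m.+2) G`_i *: ((1 + 'X) ^+ (m.+1 - i) * 'X^i)).
  rewrite /F (eqm_comp (Wp0 B _) HT) /T poly_def comp_sum mulr_sumr.
  apply: eqm_sum => i _.
  have Hi : (i <= m.+1)%N by rewrite -ltnS ltn_ord.
  rewrite comp_polyZ comp_Xn -scalerAr -!mul_polyC.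
  have -> : (1 + 'X : {poly B}) ^+ m.+1 = (1 + 'X) ^+ (m.+1 - i) * (1 + 'X) ^+ i by rewrite -exprD subnK.
  rewrite -mulrA -exprMn (Wp1 B m.+1).
  by [].
rewrite (eqm_coefP HF (leqnn _)) coef_sum.
have e : forall i : 'I_m.+2, (G`_i *: ((1 + 'X) ^+ (m.+1 - i) * 'X^i))`_m.+1 = G`_i.
  move=> i; have Hi : (i <= m.+1)%N by rewrite -ltnS ltn_ord.
  by rewrite coefZ coefMXn ltnNge Hi /= (proj2 (top1X _ _)) mulr1.
rewrite (eq_bigr _ (fun i _ => e i)) big_ord_recl.
rewrite (eqm_coefP HG0 (leqnn 0)) coefC /=.
rewrite big_add1 /= big_mkord; congr (_ + _).
apply: eq_bigr => i _.
by apply: Gcoef; rewrite -ltnS ltn_ord.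
Qed.
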